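(* For a ring $R$ the following are equivalent: (1) $Q_l(R)$ is a semi-simple ring; (2) $Q_{cl}(R)$ exists and is a semi-simple ring; (3) $R$ is a left order in a semi-simple ring; (4) $R$ has finite left rank, satisfies the ascending chain condition on left annihilators, and is semi-prime; (5) a left ideal of $R$ is essential iff it contains a regular element. If one of these conditions holds then $S_0(R)=\mathcal C_R$ and $Q_l(R)=Q_{cl}(R)$.
   Context: Rings are associative with $1$. $\mathcal C_R$ is the set of regular elements (non-zero-divisors on both sides) of $R$. A multiplicatively closed subset $S$ ($1\in S$, $0\notin S$) is a left Ore set if $Sr\cap Rs\ne\emptyset$ for all $r\in R,s\in S$, and a left denominator set if moreover $rs=0$ ($s\in S$) implies $tr=0$ for some $t\in S$. $S_0(R)$ is the largest (w.r.t. inclusion) left denominator set of $R$ contained in $\mathcal C_R$ (it exists), and $Q_l(R):=S_0(R)^{-1}R$. $Q_{cl}(R)$ is the classical left quotient ring $\mathcal C_R^{-1}R$, which exists iff $\mathcal C_R$ is a left Ore set. $R$ is a left order in a ring $Q$ (in which every regular element is invertible) if $\mathcal C_R$ is a left Ore set and $\mathcal C_R^{-1}R=Q$. $R$ has finite left rank if it contains no infinite direct sum of nonzero left ideals. *)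

(* Defs.v *)
From HB Require Import structures.
From mathcomp Require Import all_boot all_algebra.
Set Implicit Arguments. Unset Strict Implicit. Unset Printing Implicit Defensive.
Import GRing.Theory.
Local Open Scope ring_scope.

Section RingDefs.
Variable R : nzRingType.

Definition subsetR (A B : R -> Prop) := forall x, A x -> B x.

Definition regular (x : R) : Prop :=
  (forall y, x * y = 0 -> y = 0) /\ (forall y, y * x = 0 -> y = 0).

Definition mult_closed (S : R -> Prop) : Prop :=
  [/\ S 1, ~ S 0 & forall a b, S a -> S b -> S (a * b)].

Definition left_ore (S : R -> Prop) : Prop :=
  mult_closed S /\
  forall r s, S s -> exists s' r', S s' /\ s' * r = r' * s.

Definition left_denominator (S : R -> Prop) : Prop :=
  left_ore S /\
  forall r s, S s -> r * s = 0 -> exists t, S t /\ t * r = 0.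

(* S_0(R): the largest left denominator set contained in C_R, realised as the
   union of all such sets (the paper proves this union is itself one). *)
Definition S0 (x : R) : Prop :=
  exists T : R -> Prop, [/\ left_denominator T, subsetR T regular & T x].

Definition is_left_quotient (S : R -> Prop) (Q : nzRingType)
  (f : {rmorphism R -> Q}) : Prop :=
  [/\ forall s, S s -> exists u : Q, u * f s = 1 /\ f s * u = 1,
      forall q : Q, exists s r, S s /\ f s * q = f r
      & forall r, f r = 0 <-> exists s, S s /\ s * r = 0].

Definition left_ideal (L : R -> Prop) : Prop :=
  [/\ L 0, forall x y, L x -> L y -> L (x + y) & forall r x, L x -> L (r * x)].

Definition two_sided_ideal (I : R -> Prop) : Prop :=
  left_ideal I /\ forall x r, I x -> I (x * r).

Definition nonzero_set (L : R -> Prop) : Prop := exists x, L x /\ x != 0.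

Definition finite_left_rank : Prop :=
  ~ exists I : nat -> R -> Prop,
      (forall n, left_ideal (I n) /\ nonzero_set (I n)) /\
      (forall (n : nat) (x : nat -> R),
         (forall i, (i <= n)%N -> I i (x i)) ->
         \sum_(i < n.+1) x i = 0 -> forall i, (i <= n)%N -> x i = 0).

Definition lann (X : R -> Prop) (r : R) : Prop := forall x, X x -> r * x = 0.

Definition acc_left_annihilators : Prop :=
  forall A : nat -> R -> Prop,
    (forall n, exists X, forall r, A n r <-> lann X r) ->
    (forall n, subsetR (A n) (A n.+1)) ->
    exists N, forall n, (N <= n)%N -> subsetR (A n) (A N).

Definition semiprime : Prop :=
  forall I : R -> Prop, two_sided_ideal I ->
    forall n : nat, (forall s : seq R, size s = n.+1 ->
                       (forall x, x \in s -> I x) -> \prod_(x <- s) x = 0) ->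
    forall x, I x -> x = 0.

Definition essential (L : R -> Prop) : Prop :=
  left_ideal L /\
  forall J, left_ideal J -> nonzero_set J -> exists x, [/\ L x, J x & x != 0].

Definition semisimple : Prop :=
  forall L, left_ideal L -> exists L', [/\ left_ideal L',
      (forall x, L x -> L' x -> x = 0) & forall r, exists a b, [/\ L a, L' b & r = a + b]].
End RingDefs.

(* Main.v *)
Require Import Defs.
From HB Require Import structures.
From mathcomp Require Import all_boot all_algebra.
From mathcomp Require Import boolp.
From mathcomp Require classical_sets.
Set Implicit Arguments. Unset Strict Implicit. Unset Printing Implicit Defensive.
Import GRing.Theory.
Local Open Scope ring_scope.

Section Basics.
Variable R : nzRingType.
Implicit Types x y z r s : R.

Lemma regular1 : regular (1 : R).
Proof. by split=> y; rewrite ?mul1r ?mulr1. Qed.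

Lemma regularM x y : regular x -> regular y -> regular (x * y).
Proof.
move=> [x1 x2] [y1 y2]; split=> z.
  by rewrite -mulrA => /x1 /y1.
by rewrite mulrA => /y2 /x2.
Qed.

Lemma regular_neq0 x : regular x -> x != 0.
Proof.
move=> [_ h]; apply/eqP=> x0; have := h 1; rewrite x0 mulr0 => /(_ erefl).
by move/eqP; rewrite oner_eq0.
Qed.

Lemma regular_mc : mult_closed (@regular R).
Proof.
split; first exact: regular1.
  by move/regular_neq0; rewrite eqxx.
exact: regularM.
Qed.

Lemma S0_regular x : S0 x -> regular x.
Proof. by case=> T [_ sub Tx]; exact: sub. Qed.

Lemma lqE (S S' : R -> Prop) (Q : nzRingType) (f : {rmorphism R -> Q}) :
  (forall x, S x <-> S' x) -> is_left_quotient S f -> is_left_quotient S' f.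
Proof.
move=> e [h1 h2 h3]; split.
- by move=> s /e /h1.
- by move=> q; have [s [r [Ss E]]] := h2 q; exists s, r; split=> //; apply/e.
- move=> r; rewrite h3; split=> [[s [Ss E]]|[s [Ss E]]]; exists s; split=> //; exact/e.
Qed.

Lemma ore_regular_S0 : left_ore (@regular R) -> forall x, S0 x <-> regular x.
Proof.
move=> ore x; split; first exact: S0_regular.
move=> rx; exists (@regular R); split=> //.
split=> // r s [_ h] /h ->; exists 1; split; [exact: regular1 | by rewrite mul1r].
Qed.

End Basics.

Section LeftIdeals.
Variable A : nzRingType.
Implicit Types (L J K : A -> Prop) (x y z : A).

Lemma lid0 L : left_ideal L -> L 0. Proof. by case. Qed.
Lemma lidD L x y : left_ideal L -> L x -> L y -> L (x + y). Proof. by case=> _ h _; apply: h. Qed.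
Lemma lidM L r x : left_ideal L -> L x -> L (r * x). Proof. by case=> _ _ h; apply: h. Qed.
Lemma lidN L x : left_ideal L -> L x -> L (- x).
Proof. by move=> hL Lx; rewrite -mulN1r; apply: lidM. Qed.
Lemma lidB L x y : left_ideal L -> L x -> L y -> L (x - y).
Proof. by move=> hL Lx Ly; apply: lidD => //; apply: lidN. Qed.
Lemma lid_sum L n (f : nat -> A) : left_ideal L ->
  (forall i, (i < n)%N -> L (f i)) -> L (\sum_(i < n) f i).
Proof.
move=> hL; elim: n => [|n IH] h; first by rewrite big_ord0; apply: lid0.
rewrite big_ord_recr /=; apply: lidD => //; last exact: h.
by apply: IH => i lt; apply: h; apply: ltnW.
Qed.

Lemma lid_cyclic x : left_ideal (fun w => exists r, w = r * x).
Proof.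
split; first by exists 0; rewrite mul0r.
  by move=> _ _ [a ->] [b ->]; exists (a + b); rewrite mulrDl.
by move=> r _ [a ->]; exists (r * a); rewrite mulrA.
Qed.

Lemma lid_lann (X : A -> Prop) : left_ideal (lann X).
Proof.
split; first by move=> x _; rewrite mul0r.
  by move=> a b ha hb x Xx; rewrite mulrDl ha // hb // addr0.
by move=> r a ha x Xx; rewrite -mulrA ha // mulr0.
Qed.

Lemma lid_full : left_ideal (fun _ : A => True). Proof. by []. Qed.

Lemma expr_cancel x : (forall y, y * x = 0 -> y = 0) ->
  forall n y, y * x ^+ n = 0 -> y = 0.
Proof.
move=> hx; elim=> [|n IH] y; first by rewrite expr0 mulr1.
by rewrite exprSr mulrA => /hx /IH.
Qed.

Lemma fr_cancel_aux x J : left_ideal J -> (forall y, y * x = 0 -> y = 0) ->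
  (forall z, J z -> (exists y, z = y * x) -> z = 0) ->
  forall n (j : nat -> A), (forall i, (i <= n)%N -> J (j i)) ->
  \sum_(i < n.+1) j i * x ^+ i = 0 -> forall i, (i <= n)%N -> j i = 0.
Proof.
move=> hJ hx hJx; elim=> [|n IH] j hj.
  by rewrite big_ord_recl big_ord0 expr0 mulr1 addr0 => j0 [|i] //= _.
rewrite big_ord_recl expr0 mulr1.
under eq_bigr do rewrite exprSr mulrA.
rewrite -mulr_suml => e.
have j0 : j 0%N = 0.
  apply: hJx; first exact: hj.
  by exists (- \sum_(i < n.+1) j i.+1 * x ^+ i); rewrite mulNr; apply/eqP;
     rewrite -addr_eq0 e.
move: e; rewrite j0 add0r => /hx e.
have := IH (fun i => j i.+1) (fun i hi => hj i.+1 hi) e.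
by move=> h [|i] //= hi; apply: h.
Qed.

Lemma fr_cancel x : finite_left_rank A -> (forall y, y * x = 0 -> y = 0) ->
  forall J, left_ideal J -> (forall z, J z -> (exists y, z = y * x) -> z = 0) ->
  forall z, J z -> z = 0.
Proof.
move=> fr hx J hJ hJx z Jz; apply: contrapT => z0; apply: fr.
exists (fun n w => exists j, J j /\ w = j * x ^+ n); split.
  move=> n; split.
    split; first by exists 0; rewrite mul0r; split=> //; apply: lid0.
      move=> _ _ [a [Ja ->]] [b [Jb ->]]; exists (a + b); rewrite mulrDl.
      by split=> //; apply: lidD.
    move=> r _ [a [Ja ->]]; exists (r * a); rewrite mulrA; split=> //.
    exact: lidM.
  exists (z * x ^+ n); split; first by exists z.
  by apply/eqP => /(expr_cancel hx) /z0.
move=> n xs hxs e.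
have [j hj] : exists j : nat -> A, forall i, (i <= n)%N -> J (j i) /\ xs i = j i * x ^+ i.
  have : forall i, exists a, (i <= n)%N -> J a /\ xs i = a * x ^+ i.
    move=> i; case: (leqP i n) => hi.
      by have [a [Ja ->]] := hxs i hi; exists a.
    by exists 0.
  by case/choice=> j hj; exists j.
have e' : \sum_(i < n.+1) j i * x ^+ i = 0.
  by apply: etrans e; apply: eq_bigr => i _; rewrite (proj2 (hj i _)) // -ltnS.
move=> i hi; rewrite (proj2 (hj i hi)).
rewrite (fr_cancel_aux hJ hx hJx (fun i h => proj1 (hj i h)) e' hi) mul0r //.
Qed.

End LeftIdeals.

Section SS.
Variable A : nzRingType.

Lemma pad_sum n d (xs : nat -> A) :
  \sum_(i < (n + d).+1) (if (i <= n)%N then xs i else 0) = \sum_(i < n.+1) xs i.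
Proof.
elim: d => [|d IH].
  by rewrite addn0; apply: eq_bigr => i _; rewrite -ltnS ltn_ord.
rewrite addnS big_ord_recr /= IH.
by rewrite leqNgt ltnS leq_addr /= addr0.
Qed.

Definition dsum (I : nat -> A -> Prop) (w : A) :=
  exists n (xs : nat -> A), (forall i, I i (xs i)) /\ w = \sum_(i < n.+1) xs i.

Lemma lid_dsum I : (forall i, left_ideal (I i)) -> left_ideal (dsum I).
Proof.
move=> hI; split.
- exists 0%N, (fun _ => 0); split; first by move=> i; apply: lid0.
  by rewrite big1.
- move=> _ _ [n1 [xs1 [h1 ->]]] [n2 [xs2 [h2 ->]]].
  exists (maxn n1 n2), (fun i => (if (i <= n1)%N then xs1 i else 0) +
                             (if (i <= n2)%N then xs2 i else 0)); split.
    move=> i; have hi := hI i; apply: lidD => //.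
      by case: ifP => _; [apply: h1 | apply: lid0].
    by case: ifP => _; [apply: h2 | apply: lid0].
  rewrite big_split /=.
  have -> : maxn n1 n2 = (n1 + (maxn n1 n2 - n1))%N by rewrite subnKC // leq_maxl.
  rewrite pad_sum; congr (_ + _).
  have -> : (n1 + (maxn n1 n2 - n1))%N = (n2 + (maxn n1 n2 - n2))%N.
    by rewrite !subnKC // ?leq_maxl ?leq_maxr.
  by rewrite pad_sum.
- move=> r _ [n [xs [h ->]]]; exists n, (fun i => r * xs i); split.
    by move=> i; apply: lidM.
  by rewrite mulr_sumr.
Qed.

Lemma dsum_single I k z : (forall i, left_ideal (I i)) -> I k z -> dsum I z.
Proof.
move=> hI Iz; exists k, (fun i => if i == k then z else 0); split.
  by move=> i; case: eqP => [->|_] //; apply: lid0.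
rewrite big_ord_recr /= eqxx big1 ?add0r // => i _.
by rewrite ltn_eqF.
Qed.

Lemma ss_fr : semisimple A -> finite_left_rank A.
Proof.
move=> ss [I [hI ind]].
pose U := dsum I.
have hU : left_ideal U by apply: lid_dsum => i; case: (hI i).
have [V [hV UV sum]] := ss _ hU.
have [u [v [[n [xs [hxs ->]]] Vv e1]]] := sum 1.
have [hIn [z [Iz z0]]] := hI n.+1.
have Uz : U z := dsum_single (fun i => proj1 (hI i)) Iz.
have Uzu : U (z * \sum_(i < n.+1) xs i).
  exists n, (fun i => z * xs i); split; last by rewrite mulr_sumr.
  by move=> i; apply: lidM; [case: (hI i)|].
have zv0 : z * v = 0.
  apply: UV; last by apply: lidM.
  have -> : z * v = z - z * \sum_(i < n.+1) xs i.
    by rewrite -{2}(mulr1 z) e1 mulrDr addrC addKr.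
  by apply: lidB.
apply: (negP z0); apply/eqP.
have := ind n.+1 (fun i => if (i <= n)%N then - (z * xs i) else z).
move/(_ _ _ n.+1 (leqnn _)); rewrite ltnn; apply.
  move=> i hi1; case: ifP => hi.
    by apply: lidN; [case: (hI i)|apply: lidM; [case: (hI i)|]].
  by have -> : i = n.+1 by apply/eqP; rewrite eqn_leq hi1 ltnNge hi.
rewrite big_ord_recr /= ltnn.
under eq_bigr => i _ do rewrite -ltnS ltn_ord.
rewrite sumrN -mulr_sumr; rewrite -{2}(mulr1 z) e1 mulrDr zv0 addr0 addNr //.
Qed.
End SS.

Lemma unit_of_rcancel (Q : nzRingType) : semisimple Q -> forall x : Q,
  (forall y, y * x = 0 -> y = 0) -> exists u, u * x = 1 /\ x * u = 1.
Proof.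
move=> ss x hx.
have [K [hK dis sum]] := ss _ (lid_cyclic x).
have K0 : forall z, K z -> z = 0.
  apply: (fr_cancel (ss_fr ss) hx hK) => z Kz Lz; exact: dis.
have [a [b [[y ->] /K0 -> e]]] := sum 1.
rewrite addr0 in e; exists y; split=> //.
apply/eqP; rewrite -subr_eq0; apply/eqP; apply: hx.
by rewrite mulrBl -mulrA -e mulr1 mul1r subrr.
Qed.

Section C12.
Variable R : nzRingType.

Lemma c1_c2 : (exists (Q : nzRingType) (f : {rmorphism R -> Q}),
              is_left_quotient (@S0 R) f /\ semisimple Q) ->
  left_ore (@regular R) /\ exists (Q : nzRingType) (f : {rmorphism R -> Q}),
              is_left_quotient (@regular R) f /\ semisimple Q.
Proof.
move=> [Q [f [[hu hq hk] ss]]].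
have ker0 r : f r = 0 -> r = 0.
  by move/hk=> [t [/S0_regular [ht _] e]]; apply: ht.
have unitc c : regular c -> exists u, u * f c = 1 /\ f c * u = 1.
  move=> [c1 c2]; apply: unit_of_rcancel => // q e.
  have [s [r [Ss e2]]] := hq q.
  have : f (r * c) = 0 by rewrite rmorphM -e2 -mulrA e mulr0.
  move/ker0/c2 => r0; move: e2; rewrite r0 rmorph0.
  have [u [u1 _]] := hu s Ss.
  by move=> e3; rewrite -(mul1r q) -u1 -mulrA e3 mulr0.
split.
  split; first exact: regular_mc.
  move=> r c rc; have [u [u1 u2]] := unitc c rc.
  have [s [r' [Ss e]]] := hq (f r * u).
  exists s, r'; split; first exact: S0_regular.
  apply/eqP; rewrite -subr_eq0; apply/eqP; apply: ker0.
  by rewrite rmorphB !rmorphM -e -mulrA -(mulrA (f r)) u1 mulr1 subrr.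
exists Q, f; split=> //; split.
- exact: unitc.
- by move=> q; have [s [r [Ss e]]] := hq q; exists s, r; split=> //; apply: S0_regular.
- move=> r; split.
    by move/ker0 ->; exists 1; split; [exact: regular1 | rewrite mulr0].
  by move=> [s [[h _] e]]; rewrite (h _ e) rmorph0.
Qed.

End C12.

Section C25.
Variable R : nzRingType.

Lemma ore_reg_ess (L : R -> Prop) : left_ore (@regular R) -> left_ideal L ->
  (exists x, regular x /\ L x) -> essential L.
Proof.
move=> [_ ore] hL [c [rc Lc]]; split=> // J hJ [j [Jj j0]].
have [s [r [[s1 _] e]]] := ore j c rc.
exists (s * j); split.
- by rewrite e; apply: lidM.
- exact: lidM.
- by apply: contra j0 => /eqP /s1 ->.
Qed.

Lemma c2_c5 : left_ore (@regular R) ->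
  (exists (Q : nzRingType) (f : {rmorphism R -> Q}),
     is_left_quotient (@regular R) f /\ semisimple Q) ->
  forall L : R -> Prop, left_ideal L -> (essential L <-> exists x, regular x /\ L x).
Proof.
move=> ore [Q [f [[hu hq hk] ss]]] L hL; split; last exact: ore_reg_ess.
move=> [_ ess].
have ker0 r : f r = 0 -> r = 0.
  by move/hk=> [t [[ht _] e]]; apply: ht.
pose M (q : Q) := exists s, regular s /\ exists l, L l /\ f s * q = f l.
have hM : left_ideal M.
  split.
  - exists 1; split; first exact: regular1.
    by exists 0; split; [apply: lid0 | rewrite mulr0 rmorph0].
  - move=> q1 q2 [s1 [rs1 [l1 [L1 e1]]]] [s2 [rs2 [l2 [L2 e2]]]].
    have [a [b [ra e]]] := (proj2 ore) s1 s2 rs2.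
    exists (a * s1); split; first exact: regularM.
    exists (a * l1 + b * l2); split; first exact: (lidD hL (lidM _ hL L1) (lidM _ hL L2)).
    rewrite mulrDr {1}rmorphM -mulrA e1 e rmorphM -mulrA e2.
    by rewrite rmorphD !rmorphM.
  - move=> p q [s [rs [l [Ll e]]]].
    have [u [r' [ru e']]] := hq p.
    have [w [r'' [rw e'']]] := (proj2 ore) r' s rs.
    exists (w * u); split; first exact: regularM.
    exists (r'' * l); split; first exact: lidM.
    by rewrite rmorphM -mulrA (mulrA (f u)) e' mulrA -rmorphM e'' rmorphM -mulrA e rmorphM.
have [K [hK dis sum]] := ss _ hM.
pose K' (r : R) := K (f r).
have hK' : left_ideal K'.
  split; first by rewrite /K' rmorph0; apply: lid0.
    by move=> x y Kx Ky; rewrite /K' rmorphD; apply: lidD.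
  by move=> r x Kx; rewrite /K' rmorphM; apply: lidM.
have K0 : forall k, K k -> k = 0.
  move=> k Kk; apply: contrapT => k0.
  have [s [r [rs e]]] := hq k.
  have [J [Lx K'x x0]] : exists x, [/\ L x, K' x & x != 0].
    apply: ess => //; exists r; split; first by rewrite /K' -e; apply: lidM.
    apply/eqP => r0; apply: k0; move: e; rewrite r0 rmorph0.
    have [u [u1 _]] := hu s rs.
    by move=> e3; rewrite -(mul1r k) -u1 -mulrA e3 mulr0.
  apply: (negP x0); apply/eqP; apply: ker0; apply: dis => //.
  exists 1; split; first exact: regular1.
  by exists J; split=> //; rewrite rmorph1 mul1r.
have [a [b [[s [rs [l [Ll e]]]] /K0 -> e1]]] := sum 1.
rewrite addr0 in e1; rewrite -e1 mulr1 in e.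
exists l; split=> //.
have -> : l = s; last exact: rs.
by apply/eqP; rewrite -subr_eq0; apply/eqP; apply: ker0; rewrite rmorphB e subrr.
Qed.

End C25.

Section Compl.
Variable A : nzRingType.

Definition lsum (L K : A -> Prop) (x : A) := exists l k, [/\ L l, K k & x = l + k].

Lemma lid_lsum L K : left_ideal L -> left_ideal K -> left_ideal (lsum L K).
Proof.
move=> hL hK; split.
- by exists 0, 0; split; rewrite ?addr0 //; apply: lid0.
- move=> _ _ [l1 [k1 [L1 K1 ->]]] [l2 [k2 [L2 K2 ->]]].
  exists (l1 + l2), (k1 + k2); split; try exact: lidD.
  by rewrite addrACA.
- move=> r _ [l [k [Ll Kk ->]]]; exists (r * l), (r * k); split; try exact: lidM.
  by rewrite mulrDr.
Qed.

Lemma ess_complement (L : A -> Prop) : left_ideal L ->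
  exists K, [/\ left_ideal K, (forall x, L x -> K x -> x = 0) &
    forall J, left_ideal J -> nonzero_set J ->
      exists x, [/\ lsum L K x, J x & x != 0]].
Proof.
move=> hL.
pose P (K : classical_sets.set A) := [/\ (forall x y, K x -> K y -> K (x + y)),
   (forall r x, K x -> K (r * x)) & (forall x, K x -> L x -> x = 0)].
have [M [[MD MM Mdis] Mmax]] : exists M, P M /\ forall B, classical_sets.proper M B -> ~ P B.
  apply: classical_sets.Zorn_bigcup => F FP Ftot; split.
  - move=> x y [X FX Xx] [Y FY Yy].
    have [XY|YX] := Ftot _ _ FX FY.
      by exists Y => //; have [+ _ _] := FP _ FY; apply; [apply: XY|].
    by exists X => //; have [+ _ _] := FP _ FX; apply; [|apply: YX].
  - by move=> r x [X FX Xx]; exists X => //; have [_ + _] := FP _ FX; apply.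
  - by move=> x [X FX Xx]; have [_ _] := FP _ FX; apply.
pose K x := x = 0 \/ M x.
have hK : left_ideal K.
  split; first by left.
    move=> x y [->|Mx] [->|My]; rewrite ?addr0 ?add0r; try by [left | right].
    by right; apply: MD.
  by move=> r x [->|Mx]; [left; rewrite mulr0 | right; apply: MM].
exists K; split => //.
  by move=> x Lx [//|Mx]; apply: Mdis.
move=> J hJ [j0 [Jj0 j00]]; apply: contrapT => hno.
have hz : forall x, lsum L K x -> J x -> x = 0.
  move=> x h1 h2; apply: contrapT => x0; apply: hno; exists x; split=> //.
  exact/eqP.
pose B x := exists k j, [/\ K k, J j & x = k + j].
apply: (Mmax B); split.
- move=> x Mx; exists x, 0; split; [by right | exact: lid0 | by rewrite addr0].
- move=> sub; have Mj : M j0.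
    by apply: sub; exists 0, j0; split; [left | | rewrite add0r].
  apply: (negP j00); apply/eqP; apply: hz => //.
  by exists 0, j0; split; [apply: lid0 | right | rewrite add0r].
- move=> _ _ [k1 [j1 [K1 J1 ->]]] [k2 [j2 [K2 J2 ->]]].
    exists (k1 + k2), (j1 + j2); split; try exact: lidD.
    by rewrite addrACA.
- move=> r _ [k [j [Kk Jj ->]]]; exists (r * k), (r * j); split; try exact: lidM.
    by rewrite mulrDr.
- move=> _ [k [j [Kk Jj ->]]] Lkj.
    have j0' : j = 0.
      apply: hz => //; exists (k + j), (- k); split=> //; first exact: lidN.
      by rewrite addrC addKr.
    move: Lkj Kk; rewrite j0' addr0 => Lk [//|Mk]; exact: Mdis.
Qed.

End Compl.

Section C54.
Variable R : nzRingType.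
Definition cond5 := forall L : R -> Prop, left_ideal L ->
              (essential L <-> exists x, regular x /\ L x).

Lemma c5_fr : cond5 -> finite_left_rank R.
Proof.
move=> c5 [I [hI ind]].
have hIi i : left_ideal (I i) by case: (hI i).
have hU := lid_dsum hIi.
have [K [hK dis ess]] := ess_complement hU.
have essUK : essential (lsum (dsum I) K) by split=> //; apply: lid_lsum.
have [c [rc [u [k [[n [xs [hxs eu]]] Kk ec]]]]] := (proj1 (c5 _ (lid_lsum hU hK))) essUK.
pose U' (w : R) := exists ys : nat -> R, (forall i, I i (ys i)) /\ w = \sum_(i < n.+1) ys i.
have hU' : left_ideal U'.
  split.
  - by exists (fun _ => 0); split; [move=> i; apply: lid0 | rewrite big1].
  - move=> _ _ [y1 [h1 ->]] [y2 [h2 ->]]; exists (fun i => y1 i + y2 i); split.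
      by move=> i; apply: lidD.
    by rewrite big_split.
  - move=> r _ [y [h ->]]; exists (fun i => r * y i); split; last by rewrite mulr_sumr.
    by move=> i; apply: lidM.
have [_ essL'] := (proj2 (c5 _ (lid_lsum hU' hK))) (ex_intro _ _ (conj rc
   (ex_intro _ _ (ex_intro _ k (And3 (ex_intro _ xs (conj hxs eu)) Kk ec))))).
have [x [[u' [k' [[ys [hys ->]] Kk' ->]] Ix x0]]] := essL' _ (hIi n.+1) (proj2 (hI n.+1)).
have Ux : dsum I (\sum_(i < n.+1) ys i + k') := dsum_single hIi Ix.
have k0 : k' = 0.
  apply: dis => //; have -> : k' = (\sum_(i < n.+1) ys i + k') - \sum_(i < n.+1) ys i.
    by rewrite addrC addKr.
  by apply: lidB => //; exists n, ys.
move: Ix x0; rewrite k0 addr0 => Ix x0.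
apply: (negP x0); apply/eqP.
have := ind n.+1 (fun i => if (i <= n)%N then - ys i else \sum_(i < n.+1) ys i).
move/(_ _ _ n.+1 (leqnn _)); rewrite ltnn; apply.
  move=> i hi1; case: ifP => hi; first by apply: lidN.
  by have -> : i = n.+1 by apply/eqP; rewrite eqn_leq hi1 ltnNge hi.
rewrite big_ord_recr /= ltnn.
under eq_bigr => i _ do rewrite -ltnS ltn_ord.
by rewrite sumrN addNr.
Qed.

End C54.

Section C54b.
Variable R : nzRingType.

Lemma lid_ann (P X : R -> Prop) : (forall r, P r <-> lann X r) -> left_ideal P.
Proof.
move=> e; have [h0 hD hM] := lid_lann X; split.
- by apply/e.
- by move=> x y /e Px /e Py; apply/e; apply: hD.
- by move=> r x /e Px; apply/e; apply: hM.
Qed.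

Lemma ann_ess (P X B : R -> Prop) : cond5 R -> (forall r, P r <-> lann X r) ->
  left_ideal B -> subsetR P B ->
  (forall J, left_ideal J -> subsetR J B -> nonzero_set J ->
     exists x, [/\ P x, J x & x != 0]) -> subsetR B P.
Proof.
move=> c5 eP hB PB ess b Bb.
have hP := lid_ann eP.
pose E r := P (r * b).
have hE : left_ideal E.
  split; first by rewrite /E mul0r; apply: lid0.
    by move=> x y Ex Ey; rewrite /E mulrDl; apply: lidD.
  by move=> r x Ex; rewrite /E -mulrA; apply: lidM.
have essE : essential E.
  split=> // J hJ [j [Jj j0]].
  case: (pselect (forall x, J x -> x * b = 0)) => [allz|].
    by exists j; split=> //; rewrite /E allz //; apply: lid0.
  move/existsNP => [x /not_implyP [Jx xb0]].
  pose Jb w := exists y, J y /\ w = y * b.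
  have hJb : left_ideal Jb.
    split; first by exists 0; rewrite mul0r; split=> //; apply: lid0.
      move=> _ _ [y1 [J1 ->]] [y2 [J2 ->]]; exists (y1 + y2); rewrite mulrDl.
      by split=> //; apply: lidD.
    by move=> r _ [y [Jy ->]]; exists (r * y); rewrite mulrA; split=> //; apply: lidM.
  have [w [Pw [y [Jy ew]] w0]] := ess Jb hJb
    (fun _ '(ex_intro y (conj _ e)) => ltac:(rewrite e; apply: lidM => //)) 
    (ex_intro _ (x * b) (conj (ex_intro _ x (conj Jx erefl)) (introN eqP xb0))).
  exists y; split=> //; first by rewrite /E -ew.
  by apply: contra w0 => /eqP y0; rewrite ew y0 mul0r.
have [c [[c1 _] Ec]] := (proj1 (c5 _ hE)) essE.
apply/eP => z Xz; apply: c1; rewrite mulrA; exact: (proj1 (eP _) Ec).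
Qed.

End C54b.

Section C54c.
Variable R : nzRingType.

Lemma c5_acc : cond5 R -> acc_left_annihilators R.
Proof.
move=> c5 A hA mono.
have fr := c5_fr c5.
have monoA m n : (m <= n)%N -> subsetR (A m) (A n).
  move/subnK <-; elim: (n - m)%N => [|d IH] x; first by [].
  by move=> /IH; rewrite addSn; apply: mono.
have hAl n : left_ideal (A n) by have [X eX] := hA n; exact: lid_ann eX.
apply: contrapT => hno.
have hg : forall N, exists n, (N <= n)%N /\ ~ subsetR (A n) (A N).
  move=> N; apply: contrapT => h; apply: hno; exists N => n hn.
  apply: contrapT => h2; apply: h; exists n; split=> //.
have [g hgP] := choice hg.
pose Ns i := iter i g 0%N.
have NsS i : Ns i.+1 = g (Ns i) by [].
have Ns_mono i j : (i <= j)%N -> (Ns i <= Ns j)%N.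
  move/subnK <-; elim: (j - i)%N => [|d IH] //.
  by rewrite addSn NsS; apply: leq_trans IH (proj1 (hgP _)).
have hC : forall i, exists C : R -> Prop, [/\ left_ideal C, subsetR C (A (Ns i.+1)),
     nonzero_set C & forall x, A (Ns i) x -> C x -> x = 0].
  move=> i; have [X eX] := hA (Ns i).
  apply: contrapT => hneg; apply: (proj2 (hgP (Ns i))); rewrite -NsS.
  apply: (ann_ess c5 eX (hAl _) (monoA _ _ (Ns_mono _ _ (leqnSn i)))).
  move=> J hJ JB nzJ; apply: contrapT => hno2; apply: hneg; exists J; split=> //.
  move=> x Ax Jx; apply: contrapT => x0; apply: hno2; exists x; split=> //.
  exact/eqP.
have [C hCP] := choice hC.
apply: fr; exists C; split.
  by move=> n; have [? _ ? _] := hCP n.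
elim=> [|n IH] xs hxs.
  by rewrite big_ord_recl big_ord0 addr0 => e [|i] //.
rewrite big_ord_recr /= => e.
have hlast : xs n.+1 = 0.
  have [_ _ _ dis] := hCP n.+1; apply: dis; last exact: hxs.
  have -> : xs n.+1 = - \sum_(i < n.+1) xs i by apply/eqP; rewrite -addr_eq0 addrC e.
  apply: (lidN (hAl _)).
  apply: (lid_sum (hAl _)).
  move=> i hi; have [_ sub _ _] := hCP i.
  apply: (monoA _ _ (Ns_mono _ _ hi)); apply: sub; apply: hxs; exact: ltnW.
move: e; rewrite hlast addr0 => e i hi.
case: (leqP i n) => hin; first by apply: IH => // j hj; apply: hxs; apply: leqW.
by have -> : i = n.+1 by apply/eqP; rewrite eqn_leq hi hin.
Qed.

End C54c.

Section C54d.
Variable R : nzRingType.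

Lemma c5_sp : cond5 R -> semiprime R.
Proof.
move=> c5 I [hI hIr] n nil.
pose rn (x : R) := forall y, I y -> y * x = 0.
have hrn : left_ideal rn.
  split; first by move=> y _; rewrite mulr0.
    by move=> a b ha hb y Iy; rewrite mulrDr ha // hb // addr0.
  by move=> r a ha y Iy; rewrite mulrA ha //; apply: hIr.
have essrn : essential rn.
  split=> // J hJ [j [Jj j0]]; apply: contrapT => hno.
  have claim : forall k, exists s : seq R, [/\ size s = k, (forall x, x \in s -> I x) &
       (\prod_(x <- s) x) * j != 0].
    elim=> [|k [s [sz sI nz]]].
      by exists [::]; split=> //; rewrite big_nil mul1r.
    have : ~ rn ((\prod_(x <- s) x) * j).
      move=> hr; apply: hno; exists ((\prod_(x <- s) x) * j); split=> //.
      exact: lidM.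
    move/existsNP=> [y /not_implyP [Iy hy]].
    exists (y :: s); split; first by rewrite /= sz.
      by move=> x; rewrite inE => /orP [/eqP ->|/sI].
    by rewrite big_cons -mulrA; apply/eqP.
  have [s [sz sI nz]] := claim n.+1.
  by move: nz; rewrite nil // mul0r eqxx.
have [c [[_ c2] rc]] := (proj1 (c5 _ hrn)) essrn.
by move=> x Ix; apply: c2; apply: rc.
Qed.

Lemma c5_c4 : cond5 R -> [/\ finite_left_rank R, acc_left_annihilators R & semiprime R].
Proof. by move=> c5; split; [apply: c5_fr | apply: c5_acc | apply: c5_sp]. Qed.

End C54d.

Section Goldie1.
Variable R : nzRingType.
Definition l1 (a : R) (r : R) := r * a = 0.

Lemma l1_ann a r : l1 a r <-> lann (fun x => x = a) r.
Proof. by split=> [h x ->|h]; [exact: h | exact: h]. Qed.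

Lemma lid_l1 a : left_ideal (l1 a).
Proof. exact: lid_ann (l1_ann a). Qed.

Hypothesis acc : acc_left_annihilators R.

Lemma acc_max (P : R -> Prop) a0 : P a0 -> exists a, P a /\
  forall b, P b -> subsetR (l1 a) (l1 b) -> subsetR (l1 b) (l1 a).
Proof.
move=> Pa0; apply: contrapT => hno.
have hg : forall a, exists b, P a -> [/\ P b, subsetR (l1 a) (l1 b) & ~ subsetR (l1 b) (l1 a)].
  move=> a; case: (pselect (P a)) => Pa; last by exists a.
  apply: contrapT => h; apply: hno; exists a; split=> // b Pb sab.
  apply: contrapT => h2; apply: h; exists b => _; split=> //.
have [g hgP] := choice hg.
pose s n := iter n g a0.
have Ps n : P (s n) by elim: n => [|n IH] //=; have [] := hgP _ IH.
have [N hN] := acc (A := fun n => l1 (s n)) (fun n => ex_intro _ _ (l1_ann (s n)))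
  (fun n => let: And3 _ h _ := hgP _ (Ps n) in h).
by have [_ _] := hgP _ (Ps N); apply; exact: (hN N.+1 (leqnSn N)).
Qed.

Lemma acc_pow (x : R) : exists N, forall n, (N <= n)%N ->
  forall y, (y * x ^+ n) * x ^+ n = 0 -> y * x ^+ n = 0.
Proof.
have mono n : subsetR (l1 (x ^+ n)) (l1 (x ^+ n.+1)).
  by move=> y; rewrite /l1 exprSr mulrA => ->; rewrite mul0r.
have monoA m n : (m <= n)%N -> subsetR (l1 (x ^+ m)) (l1 (x ^+ n)).
  move/subnK <-; elim: (n - m)%N => [|d IH] z; first by [].
  by move=> /IH; rewrite addSn; apply: mono.
have [N hN] := acc (A := fun n => l1 (x ^+ n)) (fun n => ex_intro _ _ (l1_ann (x ^+ n)))
  mono.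
exists N => n hn y e.
apply: (monoA _ _ hn); apply: (hN (n + n)%N); first by apply: leq_trans hn (leq_addr _ _).
by rewrite /l1 exprD mulrA.
Qed.

Hypothesis sp : semiprime R.

Lemma sp_aRa (a : R) : (forall r, a * r * a = 0) -> a = 0.
Proof.
move=> h.
pose I (w : R) := exists s : seq (R * R), w = \sum_(p <- s) p.1 * a * p.2.
have hI : two_sided_ideal I.
  split; first split.
  - by exists [::]; rewrite big_nil.
  - by move=> _ _ [s1 ->] [s2 ->]; exists (s1 ++ s2); rewrite big_cat.
  - move=> r _ [s ->]; exists [seq (r * p.1, p.2) | p <- s].
    by rewrite big_map mulr_sumr; apply: eq_bigr => p _ /=; rewrite !mulrA.
  - move=> _ r [s ->]; exists [seq (p.1, p.2 * r) | p <- s].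
    by rewrite big_map mulr_suml; apply: eq_bigr => p _ /=; rewrite !mulrA.
apply: (sp hI (n := 1%N)); last by exists [:: (1, 1)]; rewrite big_seq1 mul1r mulr1.
case=> [|u [|v [|]]] //= _ hs; rewrite big_cons big_seq1.
have [s1 ->] := hs u (mem_head _ _).
have [s2 ->] : I v by apply: hs; rewrite !inE eqxx orbT.
rewrite mulr_suml big1 // => p _; rewrite mulr_sumr big1 // => q _.
have -> : p.1 * a * p.2 * (q.1 * a * q.2) = p.1 * (a * (p.2 * q.1) * a) * q.2.
  by rewrite !mulrA.
by rewrite h mulr0 mul0r.
Qed.


Lemma nonnil (K : R -> Prop) : left_ideal K -> nonzero_set K ->
  exists x, K x /\ forall n, x ^+ n != 0.
Proof.
move=> hK [x0 [Ka0 a00]]; apply: contrapT => hno.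
have nil : forall x, K x -> exists n, x ^+ n = 0.
  move=> x Kx; apply: contrapT => h; apply: hno; exists x; split=> // n.
  by apply/eqP => e; apply: h; exists n.
have [a [[Ka a0] amax]] := acc_max (P := fun a => K a /\ a != 0) (conj Ka0 a00).
apply: (negP a0); apply/eqP; apply: sp_aRa => r.
have [k hk] := nil (r * a) (lidM r hK Ka).
pose b m := a * (r * a) ^+ m.
have key : forall d m, (k <= m + d)%N -> (1 <= m)%N -> b m = 0.
  elim=> [|d IH] m hkm hm.
    by rewrite addn0 in hkm; rewrite /b -(subnK hkm) exprD hk mulr0 mulr0.
  have bS : b m.+1 = 0 by apply: IH => //; rewrite addSn -addnS.
  apply: contrapT => bm0.
  have Kb : K (b m).
    rewrite /b -(subnK hm) addn1 exprSr mulrA mulrA; apply: lidM hK Ka.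
  have sub1 : subsetR (l1 a) (l1 (b m)) by move=> t; rewrite /l1 /b mulrA => ->; rewrite mul0r.
  have := amax (b m) (conj Kb (introN eqP bm0)) sub1 (a * r).
  have e1 : a * r * b m = b m.+1 by rewrite /b exprS !mulrA.
  rewrite /l1 e1 => /(_ bS) e; apply: bm0.
  by rewrite /b -(subnK hm) addn1 exprS mulrA mulrA e mul0r.
by have := key k 1%N (leq_addl _ _) (leqnn _); rewrite /b expr1 mulrA.
Qed.

Lemma ess_sup (L L' : R -> Prop) : essential L -> left_ideal L' -> subsetR L L' ->
  essential L'.
Proof.
move=> [hL ess] hL' sub; split=> // J hJ nz.
by have [x [Lx Jx x0]] := ess J hJ nz; exists x; split=> //; apply: sub.
Qed.

Lemma nonsing y : essential (l1 y) -> y = 0.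
Proof.
move=> ey; apply: contrapT => y0.
have [z [[ez z0] zmax]] := acc_max (P := fun z => essential (l1 z) /\ z != 0)
  (conj ey (introN eqP y0)).
apply: (negP z0); apply/eqP; apply: sp_aRa => a; apply: contrapT => za0.
have nz : nonzero_set (fun w => exists r, w = r * (z * a)).
  exists (z * a); split; first by exists 1; rewrite mul1r.
  by apply/eqP => e; apply: za0; rewrite e mul0r.
have [w [lw [r ew] w0]] := (proj2 ez) _ (lid_cyclic (z * a)) nz.
have sub : subsetR (l1 z) (l1 (z * a * z)).
  by move=> t; rewrite /l1 !mulrA => ->; rewrite !mul0r.
have ess2 : essential (l1 (z * a * z)) := ess_sup ez (lid_l1 _) sub.
have := zmax _ (conj ess2 (introN eqP za0)) sub r.
rewrite /l1 mulrA -ew.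
move: lw; rewrite /l1 => -> /(_ erefl) rz.
by apply: (negP w0); rewrite ew mulrA rz mul0r.
Qed.

End Goldie1.

Section Goldie2.
Variable R : nzRingType.
Hypothesis fr : finite_left_rank R.

Definition cyc (c : R) (w : R) := exists r, w = r * c.

Lemma ess_cyc c : (forall y, y * c = 0 -> y = 0) -> essential (cyc c).
Proof.
move=> lc; split; first exact: lid_cyclic.
move=> J hJ [j [Jj j0]]; apply: contrapT => hno.
apply: (negP j0); apply/eqP; apply: (fr_cancel fr lc hJ) => // z Jz cz.
apply: contrapT => z0; apply: hno; exists z; split=> //; exact/eqP.
Qed.

Definition gprop (L : R -> Prop) (a : nat -> R) (i : nat) :=
  [/\ L (a i), a i != 0, (forall y, y * a i * a i = 0 -> y * a i = 0) &
      forall j, (j < i)%N -> a i * a j = 0].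
Definition good L k a := forall i, (i < k)%N -> gprop L a i.
Definition gext (L : R -> Prop) k (a : nat -> R) b :=
  [/\ L b, b != 0, (forall y, y * b * b = 0 -> y * b = 0) &
      forall j, (j < k)%N -> b * a j = 0].

Lemma good_indep L k a : good L k a -> forall xs : nat -> R,
  \sum_(0 <= i < k) xs i * a i = 0 -> forall i, (i < k)%N -> xs i * a i = 0.
Proof.
move=> g xs.
suff H : forall d m, (m + d)%N = k -> \sum_(m <= i < k) xs i * a i = 0 ->
    forall i, (m <= i < k)%N -> xs i * a i = 0.
  by move=> e i hi; apply: (H k 0%N) => //.
elim=> [|d IH] m hmd e i.
  by rewrite addn0 in hmd; rewrite hmd => /andP [h1 h2]; move: h2; rewrite ltnNge h1.
have hmk : (m < k)%N by rewrite -hmd addnS ltnS leq_addr.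
rewrite big_ltn // in e.
have [_ _ hm _] := g m hmk.
have em : xs m * a m = 0.
  apply: hm; have := congr1 (fun t => t * a m) e; rewrite mul0r mulrDl.
  rewrite mulr_suml big_nat_cond big1 ?addr0 // => j /andP [/andP [h1 h2] _].
  by have [_ _ _ hj] := g j h2; rewrite -mulrA hj // mulr0.
move: e; rewrite em add0r => e.
case/andP => h1 h2; case: (eqVneq i m) => [->//|him].
apply: (IH m.+1) => //; first by rewrite addSnnS.
by rewrite h2 andbT ltn_neqAle eq_sym him h1.
Qed.

Lemma good_ext L k a a' : (forall i, (i < k)%N -> a i = a' i) -> good L k a -> good L k a'.
Proof.
move=> e g i hi; have [h1 h2 h3 h4] := g i hi; rewrite /gprop -e //; split=> //.
by move=> j hj; rewrite -e ?h4 //; apply: ltn_trans hj hi.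
Qed.

Hypothesis acc : acc_left_annihilators R.
Hypothesis sp : semiprime R.

Lemma good_stuck L : exists k a, good L k a /\ ~ exists b, gext L k a b.
Proof.
apply: contrapT => hno.
have hext : forall p : nat * (nat -> R), exists b, good L p.1 p.2 -> gext L p.1 p.2 b.
  move=> [k a]; case: (pselect (good L k a)) => ga; last by exists 0.
  apply: contrapT => h; apply: hno; exists k, a; split=> // [[b hb]]; apply: h.
  by exists b.
have [h hh] := choice hext.
pose pre := fix pre (n : nat) : seq R :=
  if n is n'.+1 then rcons (pre n') (h (n', fun i => nth 0 (pre n') i)) else [::].
have size_pre n : size (pre n) = n by elim: n => //= n IH; rewrite size_rcons IH.
pose a i := nth 0 (pre i.+1) i.
have a_eq n : a n = h (n, fun i => nth 0 (pre n) i).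
  by rewrite /a /= nth_rcons size_pre ltnn eqxx.
have nth_pre n i : (i < n)%N -> nth 0 (pre n) i = a i.
  elim: n => // n IH hi; rewrite /= nth_rcons size_pre.
  case: (ltngtP i n) => [lt|gt|->]; first exact: IH.
    by move: hi; rewrite ltnS leqNgt gt.
  by rewrite a_eq.
have ga : forall n, good L n a.
  elim=> [|n IH] i hi //.
  rewrite ltnS leq_eqVlt in hi; case/orP: hi => [/eqP ->|hi]; last exact: IH.
  have gn : good L n (fun t => nth 0 (pre n) t).
    by apply: good_ext IH => i0 hi0; rewrite nth_pre.
  have [h1 h2 h3 h4] := hh (n, fun i => nth 0 (pre n) i) gn.
  rewrite /gprop a_eq; split=> // j hj; rewrite -(nth_pre n j hj); exact: h4.
apply: fr; exists (fun i => cyc (a i)); split.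
  move=> n; split; first exact: lid_cyclic.
  have [_ an _ _] := ga n.+1 n (ltnSn n).
  by exists (a n); split=> //; exists 1; rewrite mul1r.
move=> n xs hxs e.
have [ys hys] : exists ys : nat -> R, forall i, (i <= n)%N -> xs i = ys i * a i.
  have : forall i, exists y, (i <= n)%N -> xs i = y * a i.
    move=> i; case: (leqP i n) => hi; last by exists 0.
    by have [y ->] := hxs i hi; exists y.
  by case/choice=> ys hys; exists ys.
have e' : \sum_(0 <= i < n.+1) ys i * a i = 0.
  rewrite big_mkord; apply: etrans e; apply: eq_bigr => i _.
  by rewrite hys // -ltnS.
move=> i hi; rewrite hys //; exact: (good_indep (ga n.+1) e').
Qed.

Lemma goldie (L : R -> Prop) : left_ideal L -> essential L -> exists c, regular c /\ L c.
Proof.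
move=> hL essL.
have [k [a [g stuck]]] := good_stuck L.
pose K x := L x /\ forall j, (j < k)%N -> x * a j = 0.
have hK : left_ideal K.
  split; first by split; [apply: lid0 | move=> j _; rewrite mul0r].
    move=> x y [Lx hx] [Ly hy]; split; first exact: lidD.
    by move=> j hj; rewrite mulrDl hx // hy // addr0.
  by move=> r x [Lx hx]; split; [apply: lidM | move=> j hj; rewrite -mulrA hx // mulr0].
have K0 : forall x, K x -> x = 0.
  move=> x0 Kx0; apply: contrapT => x00.
  have [x [[Lx hx] xn]] := nonnil acc sp hK (ex_intro _ x0 (conj Kx0 (introN eqP x00))).
  have [N hN] := acc_pow acc x.
  apply: stuck; exists (x ^+ N.+1); split.
  - by rewrite exprSr; apply: lidM.
  - exact: xn.
  - exact: hN.
  - by move=> j hj; rewrite exprSr -mulrA hx // mulr0.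
pose c := \sum_(0 <= i < k) a i.
have Lc : L c.
  rewrite /c big_mkord; apply: (lid_sum hL) => i hi; by have [] := g i hi.
have lc : forall y, y * c = 0 -> y = 0.
  move=> y; rewrite /c mulr_sumr => e.
  have hy := good_indep g e.
  pose A' y := forall j, (j < k)%N -> y * a j = 0.
  have hA' : left_ideal A'.
    split; first by move=> j _; rewrite mul0r.
      by move=> u v hu hv j hj; rewrite mulrDl hu // hv // addr0.
    by move=> r u hu j hj; rewrite -mulrA hu // mulr0.
  apply: contrapT => y0.
  have [x [Lx Ax x0]] := (proj2 essL) A' hA' (ex_intro _ y (conj hy (introN eqP y0))).
  by apply: (negP x0); apply/eqP; apply: K0.
exists c; split=> //; split=> // z cz.
apply: (nonsing acc sp); apply: (ess_sup (ess_cyc lc) (lid_l1 _)).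
by move=> _ [r ->]; rewrite /l1 -mulrA cz mulr0.
Qed.

Lemma reg_ess (L : R -> Prop) : left_ideal L -> (exists c, regular c /\ L c) -> essential L.
Proof.
move=> hL [c [[_ c2] Lc]]; apply: (ess_sup (ess_cyc c2) hL).
by move=> _ [r ->]; apply: lidM.
Qed.

End Goldie2.

Section SS5.
Variable R : nzRingType.

Lemma c5_ore : cond5 R -> left_ore (@regular R).
Proof.
move=> c5; split; first exact: regular_mc.
move=> r c rc.
pose L x := exists y, x * r = y * c.
have hL : left_ideal L.
  split; first by exists 0; rewrite !mul0r.
    by move=> x y [a ea] [b eb]; exists (a + b); rewrite !mulrDl ea eb.
  by move=> t x [a ea]; exists (t * a); rewrite -!mulrA ea.
have essc : essential (cyc c).
  by apply: (proj2 (c5 _ (lid_cyclic c))); exists c; split=> //; exists 1; rewrite mul1r.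
have essL : essential L.
  split=> // J hJ [j [Jj j0]].
  case: (pselect (forall x, J x -> x * r = 0)) => [allz|].
    by exists j; split=> //; exists 0; rewrite mul0r allz.
  move/existsNP => [x /not_implyP [Jx xr0]].
  pose Jr w := exists y, J y /\ w = y * r.
  have hJr : left_ideal Jr.
    split; first by exists 0; rewrite mul0r; split=> //; apply: lid0.
      move=> _ _ [y1 [J1 ->]] [y2 [J2 ->]]; exists (y1 + y2); rewrite mulrDl.
      by split=> //; apply: lidD.
    by move=> t _ [y [Jy ->]]; exists (t * y); rewrite mulrA; split=> //; apply: lidM.
  have [w [[y ey] [x' [Jx' ew]] w0]] := (proj2 essc) Jr hJr
    (ex_intro _ (x * r) (conj (ex_intro _ x (conj Jx erefl)) (introN eqP xr0))).
  exists x'; split=> //; first by exists y; rewrite -ew.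
  by apply: contra w0 => /eqP y0; rewrite ew y0 mul0r.
have [s [rs [y e]]] := (proj1 (c5 _ hL)) essL.
by exists s, y; split.
Qed.

Lemma lid_frac (Q : nzRingType) (f : {rmorphism R -> Q}) (L : R -> Prop) :
  left_ore (@regular R) -> is_left_quotient (@regular R) f -> left_ideal L ->
  left_ideal (fun q => exists s, regular s /\ exists l, L l /\ f s * q = f l).
Proof.
move=> ore [hu hq hk] hL; split.
- exists 1; split; first exact: regular1.
  by exists 0; split; [apply: lid0 | rewrite mulr0 rmorph0].
- move=> q1 q2 [s1 [rs1 [l1 [L1 e1]]]] [s2 [rs2 [l2 [L2 e2]]]].
  have [a [b [ra e]]] := (proj2 ore) s1 s2 rs2.
  exists (a * s1); split; first exact: regularM.
  exists (a * l1 + b * l2); split; first exact: (lidD hL (lidM _ hL L1) (lidM _ hL L2)).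
  rewrite mulrDr {1}rmorphM -mulrA e1 e rmorphM -mulrA e2.
  by rewrite rmorphD !rmorphM.
- move=> p q [s [rs [l [Ll e]]]].
  have [u [r' [ru e']]] := hq p.
  have [w [r'' [rw e'']]] := (proj2 ore) r' s rs.
  exists (w * u); split; first exact: regularM.
  exists (r'' * l); split; first exact: lidM.
  by rewrite rmorphM -mulrA (mulrA (f u)) e' mulrA -rmorphM e'' rmorphM -mulrA e rmorphM.
Qed.

Lemma ss_of_c5 (Q : nzRingType) (f : {rmorphism R -> Q}) :
  cond5 R -> is_left_quotient (@regular R) f -> semisimple Q.
Proof.
move=> c5 hf; have ore := c5_ore c5; have [hu hq hk] := hf.
have ker0 r : f r = 0 -> r = 0.
  by move/hk=> [t [[ht _] e]]; apply: ht.
move=> M hM.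
pose L r := M (f r).
have hL : left_ideal L.
  split; first by rewrite /L rmorph0; apply: lid0.
    by move=> x y Lx Ly; rewrite /L rmorphD; apply: lidD.
  by move=> r x Lx; rewrite /L rmorphM; apply: lidM.
have [K [hK dis essK]] := ess_complement hL.
have [c [rc [l [k [Ll Kk ec]]]]] : exists c, regular c /\ lsum L K c.
  by apply: (proj1 (c5 _ (lid_lsum hL hK))); split=> //; apply: lid_lsum.
exists (fun q => exists s, regular s /\ exists k, K k /\ f s * q = f k); split.
- exact: (lid_frac ore hf hK).
- move=> q Mq [s [rs [k' [Kk' e]]]].
  have k0 : k' = 0 by apply: dis => //; rewrite /L -e; apply: lidM.
  move: e; rewrite k0 rmorph0 => e.
  have [u [u1 _]] := hu s rs.
  by rewrite -(mul1r q) -u1 -mulrA e mulr0.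
- move=> q; have [u [u1 u2]] := hu c rc.
  exists (q * u * f l), (q * u * f k); split.
  + by apply: lidM.
  + rewrite -mulrA; apply: (lidM _ (lid_frac ore hf hK)).
    by exists c; split=> //; exists k; split=> //; rewrite mulrA u2 mul1r.
  + by rewrite -mulrDr -rmorphD -ec -mulrA u1 mulr1.
Qed.

End SS5.

Section Raw.
Variable R : nzRingType.
Hypothesis ore : left_ore (@regular R).
Implicit Types (s t r n a b c d u v : R) (p q : R * R).

Definition E' s1 r1 s2 r2 := forall u v, u * s1 = v * s2 -> u * r1 = v * r2.
Definition Ep p q := E' p.1 p.2 q.1 q.2.
Definition rp p := regular p.1.

Lemma canr s a b : regular s -> a * s = b * s -> a = b.
Proof.
move=> [_ h] e; apply/eqP; rewrite -subr_eq0; apply/eqP; apply: h.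
by rewrite mulrBl e subrr.
Qed.

Lemma canl s a b : regular s -> s * a = s * b -> a = b.
Proof.
move=> [h _] e; apply/eqP; rewrite -subr_eq0; apply/eqP; apply: h.
by rewrite mulrBr e subrr.
Qed.

Lemma E'_refl s r : regular s -> E' s r s r.
Proof. by move=> rs u v /(canr rs) ->. Qed.

Lemma E'_sym s1 r1 s2 r2 : E' s1 r1 s2 r2 -> E' s2 r2 s1 r1.
Proof. by move=> h u v e; rewrite (h v u). Qed.

Lemma E'_trans s1 r1 s2 r2 s3 r3 : regular s2 ->
  E' s1 r1 s2 r2 -> E' s2 r2 s3 r3 -> E' s1 r1 s3 r3.
Proof.
move=> rs2 h12 h23 u v e.
have [a [b [ra eab]]] := (proj2 ore) (u * s1) s2 rs2.
apply: (canl ra); rewrite !mulrA.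
have e1 : (a * u) * s1 = b * s2 by rewrite -mulrA.
have e2 : b * s2 = (a * v) * s3 by rewrite -eab e !mulrA.
by rewrite (h12 _ _ e1) (h23 _ _ e2).
Qed.

Lemma E'_one a b s1 r1 s2 r2 : regular a -> regular s2 ->
  a * s1 = b * s2 -> a * r1 = b * r2 -> E' s1 r1 s2 r2.
Proof.
move=> ra rs2 e1 e2 u v e.
have [c [d [rc ecd]]] := (proj2 ore) u a ra.
have edb : d * b = c * v.
  apply: (canr rs2); rewrite -mulrA -e1 mulrA -ecd -mulrA e mulrA //.
apply: (canl rc); rewrite !mulrA ecd -mulrA e2 mulrA edb //.
Qed.

Lemma E'_exp u s r : regular s -> E' (u * s) (u * r) s r.
Proof.
move=> rs; apply: (E'_one (a := 1) (b := u)) => //; first exact: regular1.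
  by rewrite mul1r.
by rewrite mul1r.
Qed.

Definition oreR r s : R * R :=
  match pselect (exists p : R * R, regular p.1 /\ p.1 * r = p.2 * s) with
  | left h => proj1_sig (cid h)
  | right _ => (1, 0)
  end.

Lemma oreP r s : regular s -> regular (oreR r s).1 /\ (oreR r s).1 * r = (oreR r s).2 * s.
Proof.
move=> rs; rewrite /oreR; case: pselect => [h|n]; first exact: (proj2_sig (cid h)).
exfalso; apply: n; have [a [b [ra e]]] := (proj2 ore) r s rs.
by exists (a, b).
Qed.

Definition addR p q := let o := oreR p.1 q.1 in (o.1 * p.1, o.1 * p.2 + o.2 * q.2).
Definition mulR p q := let o := oreR p.2 q.1 in (o.1 * p.1, o.2 * q.2).
Definition oppR p := (p.1, - p.2).

Lemma rp_add p q : rp p -> rp q -> rp (addR p q).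
Proof. by move=> hp hq; apply: regularM => //; case: (oreP p.1 hq). Qed.
Lemma rp_mul p q : rp p -> rp q -> rp (mulR p q).
Proof. by move=> hp hq; apply: regularM => //; case: (oreP p.2 hq). Qed.
Lemma rp_opp p : rp p -> rp (oppR p). Proof. by []. Qed.

Lemma Ep_refl p : rp p -> Ep p p. Proof. by move=> h; apply: E'_refl. Qed.
Lemma Ep_sym p q : Ep p q -> Ep q p. Proof. exact: E'_sym. Qed.
Lemma Ep_trans q p p' : rp q -> Ep p q -> Ep q p' -> Ep p p'.
Proof. exact: E'_trans. Qed.

Lemma add_spec p q t n1 n2 : rp p -> rp q -> regular t ->
  Ep p (t, n1) -> Ep q (t, n2) -> Ep (addR p q) (t, n1 + n2).
Proof.
move=> hp hq rt h1 h2; rewrite /addR /Ep /=.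
have [ra eab] := oreP p.1 hq.
set a := (oreR p.1 q.1).1 in ra eab *; set b := (oreR p.1 q.1).2 in eab *.
have [c [d [rc ecd]]] := (proj2 ore) (a * p.1) t rt.
apply: (E'_one (a := c) (b := d)) => //.
have e1 : (c * a) * p.1 = d * t by rewrite -mulrA.
have e2 : (c * b) * q.1 = d * t by rewrite -mulrA -eab.
rewrite mulrDr !mulrA (h1 _ _ e1) (h2 _ _ e2) /=.
by rewrite mulrDr.
Qed.

Lemma Ep_exp u p : rp p -> Ep (u * p.1, u * p.2) p.
Proof. by move=> h; apply: E'_exp. Qed.

Lemma common p q : rp p -> rp q ->
  exists t n1 n2, [/\ regular t, Ep p (t, n1) & Ep q (t, n2)].
Proof.
move=> hp hq; have [ra eab] := oreP p.1 hq.
set a := (oreR p.1 q.1).1 in ra eab *; set b := (oreR p.1 q.1).2 in eab *.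
exists (a * p.1), (a * p.2), (b * q.2); split.
- exact: regularM.
- by apply: Ep_sym; apply: Ep_exp.
- by rewrite eab; apply: Ep_sym; apply: (Ep_exp (u := b) hq).
Qed.

Lemma rescale p t n a : regular t -> regular (a * t) -> Ep p (t, n) -> Ep p (a * t, a * n).
Proof.
move=> rt rat h; apply: (Ep_trans (q := (t, n))) => //.
by apply: Ep_sym; apply: (Ep_exp (u := a) (p := (t, n))).
Qed.

Lemma common3 p q p' : rp p -> rp q -> rp p' ->
  exists t n1 n2 n3, [/\ regular t, Ep p (t, n1), Ep q (t, n2) & Ep p' (t, n3)].
Proof.
move=> hp hq hr; have [t [n1 [n2 [rt h1 h2]]]] := common hp hq.
have [ra eab] := oreP t hr.
set a := (oreR t p'.1).1 in ra eab *; set b := (oreR t p'.1).2 in eab *.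
have rat : regular (a * t) by apply: regularM.
exists (a * t), (a * n1), (a * n2), (b * p'.2); split=> //.
- exact: rescale.
- exact: rescale.
- by rewrite eab; apply: Ep_sym; apply: (Ep_exp (u := b) hr).
Qed.


Lemma add_resp p p' q q' : rp p -> rp p' -> rp q -> rp q' ->
  Ep p p' -> Ep q q' -> Ep (addR p q) (addR p' q').
Proof.
move=> hp hp' hq hq' e1 e2.
have [t [n1 [n2 [rt h1 h2]]]] := common hp hq.
have h1' : Ep p' (t, n1) by apply: (Ep_trans hp) => //; apply: Ep_sym.
have h2' : Ep q' (t, n2) by apply: (Ep_trans hq) => //; apply: Ep_sym.
apply: (Ep_trans (q := (t, n1 + n2))) => //; first exact: add_spec.
by apply: Ep_sym; apply: add_spec.
Qed.

Lemma mul_spec p q c d : rp p -> rp q -> regular (c * p.1) ->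
  c * p.2 = d * q.1 -> Ep (mulR p q) (c * p.1, d * q.2).
Proof.
move=> hp hq rc ecd; rewrite /mulR /Ep /=.
have [rc0 e0] := oreP p.2 hq.
set c0 := (oreR p.2 q.1).1 in rc0 e0 *; set d0 := (oreR p.2 q.1).2 in e0 *.
have [e [e' [re ee]]] := (proj2 ore) (c0 * p.1) (c * p.1) rc.
have ec : e * c0 = e' * c by apply: (canr hp); rewrite -!mulrA.
have ed : e * d0 = e' * d.
  by apply: (canr hq); rewrite -!mulrA -e0 -ecd !mulrA ec.
apply: (E'_one (a := e) (b := e')) => //.
by rewrite !mulrA ed.
Qed.

Lemma mul_resp_l p p' q : rp p -> rp p' -> rp q -> Ep p p' -> Ep (mulR p q) (mulR p' q).
Proof.
move=> hp hp' hq e.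
have [u [u' [ru eu]]] := (proj2 ore) p.1 p'.1 hp'.
have eu2 := e _ _ eu.
have [c [d [rc ecd]]] := (proj2 ore) (u * p.2) q.1 hq.
have rw : regular (c * u * p.1) by rewrite -mulrA; apply: regularM => //; apply: regularM.
have s1 : Ep (mulR p q) (c * u * p.1, d * q.2).
  by apply: mul_spec => //; rewrite -mulrA.
have s2 : Ep (mulR p' q) (c * u * p.1, d * q.2).
  rewrite -mulrA eu mulrA; apply: mul_spec => //; first by rewrite -mulrA -eu mulrA.
  by rewrite -mulrA -eu2.
apply: (Ep_trans (q := (c * u * p.1, d * q.2))) => //; exact: Ep_sym.
Qed.

Lemma mul_resp_r p q q' : rp p -> rp q -> rp q' -> Ep q q' -> Ep (mulR p q) (mulR p q').
Proof.
move=> hp hq hq' e.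
have [v [v' [rv ev]]] := (proj2 ore) q.1 q'.1 hq'.
have ev2 := e _ _ ev.
have [c [d [rc ecd]]] := (proj2 ore) p.2 (v * q.1) (regularM rv hq).
have rcp : regular (c * p.1) by apply: regularM.
have s1 : Ep (mulR p q) (c * p.1, d * v * q.2).
  by apply: mul_spec => //; rewrite -mulrA.
have s2 : Ep (mulR p q') (c * p.1, d * v * q.2).
  rewrite -mulrA ev2 mulrA; apply: mul_spec => //.
  by rewrite -mulrA -ev.
apply: (Ep_trans (q := (c * p.1, d * v * q.2))) => //; exact: Ep_sym.
Qed.

Lemma mul_resp p p' q q' : rp p -> rp p' -> rp q -> rp q' ->
  Ep p p' -> Ep q q' -> Ep (mulR p q) (mulR p' q').
Proof.
move=> hp hp' hq hq' e1 e2.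
apply: (Ep_trans (q := mulR p' q)); first exact: rp_mul.
  exact: mul_resp_l.
exact: mul_resp_r.
Qed.

Lemma opp_resp p p' : Ep p p' -> Ep (oppR p) (oppR p').
Proof. by move=> h u v e; rewrite /= !mulrN (h _ _ e). Qed.

Lemma r1 : regular (1 : R). Proof. exact: regular1. Qed.
Lemma rp1 n : rp (1, n). Proof. exact: regular1. Qed.

Lemma addA_R p q p' : rp p -> rp q -> rp p' ->
  Ep (addR p (addR q p')) (addR (addR p q) p').
Proof.
move=> hp hq hr; have [t [n1 [n2 [n3 [rt h1 h2 h3]]]]] := common3 hp hq hr.
apply: (Ep_trans (q := (t, n1 + (n2 + n3)))) => //.
  apply: add_spec => //; first exact: rp_add.
  exact: add_spec.
rewrite addrA; apply: Ep_sym; apply: add_spec => //; first exact: rp_add.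
exact: add_spec.
Qed.

Lemma addC_R p q : rp p -> rp q -> Ep (addR p q) (addR q p).
Proof.
move=> hp hq; have [t [n1 [n2 [rt h1 h2]]]] := common hp hq.
apply: (Ep_trans (q := (t, n1 + n2))) => //; first exact: add_spec.
by rewrite addrC; apply: Ep_sym; apply: add_spec.
Qed.

Lemma add0_R p : rp p -> Ep (addR (1, 0) p) p.
Proof.
move=> hp; have e0 : Ep (1, 0) (p.1, 0).
  have := Ep_exp (u := p.1) (rp1 0); rewrite mulr1 mulr0 => h; exact: Ep_sym.
have := add_spec (rp1 0) hp hp e0 (Ep_refl hp); rewrite add0r.
by case: p hp {e0}.
Qed.

Lemma addN_R p : rp p -> Ep (addR (oppR p) p) (1, 0).
Proof.
move=> hp; have := @add_spec (oppR p) p p.1 (- p.2) p.2 (rp_opp hp) hp hp (Ep_refl (p := (p.1, - p.2)) hp) (Ep_refl (p := (p.1, p.2)) hp).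
rewrite addNr => h; apply: (Ep_trans (q := (p.1, 0))) => //.
by have := Ep_exp (u := p.1) (rp1 0); rewrite mulr1 mulr0.
Qed.

Lemma mul1l_R p : rp p -> Ep (mulR (1, 1) p) p.
Proof.
move=> hp; have : Ep (mulR (1, 1) p) (p.1 * 1, 1 * p.2).
  by apply: mul_spec => //; [exact: rp1 | rewrite mulr1 | rewrite mulr1 mul1r].
by rewrite mulr1 mul1r; case: p hp.
Qed.

Lemma mul1r_R p : rp p -> Ep (mulR p (1, 1)) p.
Proof.
move=> hp; have : Ep (mulR p (1, 1)) (1 * p.1, p.2 * 1).
  by apply: mul_spec => //; [exact: rp1 | rewrite mul1r | rewrite mul1r mulr1].
by rewrite mul1r mulr1; case: p hp.
Qed.

Lemma mulA_R p q p' : rp p -> rp q -> rp p' ->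
  Ep (mulR p (mulR q p')) (mulR (mulR p q) p').
Proof.
move=> hp hq hr.
have [rc e1] := oreP p.2 hq.
set c := (oreR p.2 q.1).1 in rc e1 *; set d := (oreR p.2 q.1).2 in e1 *.
have [re e2] := oreP (d * q.2) hr.
set e := (oreR (d * q.2) p'.1).1 in re e2 *; set g := (oreR (d * q.2) p'.1).2 in e2 *.
have [rc' e3] := oreP q.2 hr.
set c' := (oreR q.2 p'.1).1 in rc' e3 *; set d' := (oreR q.2 p'.1).2 in e3 *.
have [k [D [rk ekD]]] := (proj2 ore) (e * d) c' rc'.
have hqr : rp (mulR q p') by apply: rp_mul.
have rC : regular (k * e * c * p.1).
  by apply: regularM => //; apply: regularM => //; apply: regularM.
have mqr : mulR q p' = (c' * q.1, d' * p'.2) := erefl.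
have mpq : mulR (mulR p q) p' = (e * (c * p.1), g * p'.2) := erefl.
have s1 : Ep (mulR p (mulR q p')) (k * e * c * p.1, D * (d' * p'.2)).
  rewrite mqr; apply: (mul_spec (c := k * e * c) (d := D)) => //=.
  by rewrite -!mulrA e1 !mulrA -(mulrA k) ekD.
have s2 : Ep (mulR (mulR p q) p') (k * e * c * p.1, k * g * p'.2).
  rewrite mpq; apply: Ep_sym.
  have := Ep_exp (u := k) (p := (e * (c * p.1), g * p'.2)); rewrite /= !mulrA; apply.
  by apply: regularM => //; apply: regularM.
have eD : D * d' = k * g.
  apply: (canr hr); rewrite -!mulrA -e3 -e2 !mulrA -(mulrA k) ekD //.
apply: (Ep_trans (q := (k * e * c * p.1, k * g * p'.2))) => //; first by rewrite mulrA eD in s1.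
exact: Ep_sym.
Qed.

Lemma mulDl_R p q p' : rp p -> rp q -> rp p' ->
  Ep (mulR (addR p q) p') (addR (mulR p p') (mulR q p')).
Proof.
move=> hp hq hr; have [t [n1 [n2 [rt h1 h2]]]] := common hp hq.
have [rc1 e1] := oreP n1 hr.
set c1 := (oreR n1 p'.1).1 in rc1 e1 *; set d1 := (oreR n1 p'.1).2 in e1 *.
have [rc2 e2] := oreP (c1 * n2) hr.
set c2 := (oreR (c1 * n2) p'.1).1 in rc2 e2 *; set d2 := (oreR (c1 * n2) p'.1).2 in e2 *.
have rCt : regular (c2 * c1 * t) by apply: regularM => //; apply: regularM.
have X1 : Ep (mulR (t, n1 + n2) p') (c2 * c1 * t, (c2 * d1 + d2) * p'.2).
  apply: mul_spec => //=; rewrite mulrDr mulrDl -!mulrA e1 e2 !mulrA //.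
have X2 : Ep (mulR p p') (c2 * c1 * t, c2 * d1 * p'.2).
  apply: (Ep_trans (q := mulR (t, n1) p')); first exact: rp_mul.
    exact: mul_resp_l.
  apply: mul_spec => //=; rewrite -!mulrA e1 //.
have X3 : Ep (mulR q p') (c2 * c1 * t, d2 * p'.2).
  apply: (Ep_trans (q := mulR (t, n2) p')); first exact: rp_mul.
    exact: mul_resp_l.
  apply: mul_spec => //=; rewrite -!mulrA e2 //.
apply: (Ep_trans (q := mulR (t, n1 + n2) p')); first exact: rp_mul.
  apply: mul_resp_l => //; first exact: rp_add.
  exact: add_spec.
apply: (Ep_trans (q := (c2 * c1 * t, (c2 * d1 + d2) * p'.2))) => //.
rewrite mulrDl; apply: Ep_sym; apply: add_spec => //; exact: rp_mul.
Qed.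

Lemma mulDr_R p q p' : rp p -> rp q -> rp p' ->
  Ep (mulR p (addR q p')) (addR (mulR p q) (mulR p p')).
Proof.
move=> hp hq hr; have [t [n1 [n2 [rt h1 h2]]]] := common hq hr.
have [c [d [rc ecd]]] := (proj2 ore) p.2 t rt.
have rcp : regular (c * p.1) by apply: regularM.
have X1 : Ep (mulR p (t, n1 + n2)) (c * p.1, d * (n1 + n2)) by apply: mul_spec.
have X2 : Ep (mulR p q) (c * p.1, d * n1).
  apply: (Ep_trans (q := mulR p (t, n1))); first exact: rp_mul.
    exact: mul_resp_r.
  by apply: mul_spec.
have X3 : Ep (mulR p p') (c * p.1, d * n2).
  apply: (Ep_trans (q := mulR p (t, n2))); first exact: rp_mul.
    exact: mul_resp_r.
  by apply: mul_spec.
apply: (Ep_trans (q := mulR p (t, n1 + n2))); first exact: rp_mul.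
  apply: mul_resp_r => //; first exact: rp_add.
  exact: add_spec.
apply: (Ep_trans (q := (c * p.1, d * (n1 + n2)))) => //.
rewrite mulrDr; apply: Ep_sym; apply: add_spec => //; exact: rp_mul.
Qed.

Lemma addE_R a b : Ep (addR (1, a) (1, b)) (1, a + b).
Proof. by apply: add_spec; try exact: rp1; apply: Ep_refl; exact: rp1. Qed.

Lemma mulE_R a b : Ep (mulR (1, a) (1, b)) (1, a * b).
Proof.
have : Ep (mulR (1, a) (1, b)) (1 * 1, a * b).
  by apply: mul_spec; rewrite /= ?mulr1 ?mul1r //; exact: rp1.
by rewrite mulr1.
Qed.

Lemma unitl_R s : regular s -> Ep (mulR (s, 1) (1, s)) (1, 1).
Proof.
move=> rs; apply: (Ep_trans (q := (1 * s, 1 * s))).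
- by rewrite /rp mul1r.
- by apply: mul_spec; rewrite /= ?mul1r //; exact: rp1.
- by have := Ep_exp (u := s) (rp1 1); rewrite mulr1 mul1r.
Qed.

Lemma unitr_R s : regular s -> Ep (mulR (1, s) (s, 1)) (1, 1).
Proof.
move=> rs; have : Ep (mulR (1, s) (s, 1)) (1 * 1, 1 * 1).
  by apply: mul_spec; rewrite /= ?mul1r //; exact: rp1.
by rewrite mul1r.
Qed.

Lemma frac_R s r : regular s -> Ep (mulR (1, s) (s, r)) (1, r).
Proof.
move=> rs; have : Ep (mulR (1, s) (s, r)) (1 * 1, 1 * r).
  by apply: mul_spec; rewrite /= ?mul1r //; exact: rp1.
by rewrite !mul1r.
Qed.

Lemma ker_R r : Ep (1, r) (1, 0) -> r = 0.
Proof. by move=> h; have := h 1 1 erefl; rewrite !mul1r. Qed.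

End Raw.

Section Loc.
Local Open Scope quotient_scope.
Variable R : nzRingType.
Hypothesis ore : left_ore (@regular R).

Definition Tp := {p : R * R | `[< regular p.1 >]}.
Definition oneT : Tp := exist _ (1, 1) (asboolT (@regular1 R)).
Definition mk (p : R * R) : Tp := insubd oneT p.

Lemma val_mk p : regular p.1 -> val (mk p) = p.
Proof. by move=> h; rewrite /mk val_insubd (asboolT h). Qed.

Lemma Treg (x : Tp) : rp (val x).
Proof. exact: (asboolW (valP x)). Qed.

Lemma mk_val (x : Tp) : mk (val x) = x.
Proof. by apply: val_inj; rewrite val_mk //; exact: Treg. Qed.

Definition eT (x y : Tp) : bool := `[< Ep (val x) (val y) >].

Lemma eT_refl : reflexive eT.
Proof. by move=> x; apply/asboolP; apply: Ep_refl; exact: Treg. Qed.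
Lemma eT_sym : symmetric eT.
Proof.
by move=> x y; apply/asboolP/asboolP => /Ep_sym.
Qed.
Lemma eT_trans : transitive eT.
Proof.
move=> y x z /asboolP h1 /asboolP h2; apply/asboolP.
exact: (Ep_trans ore (Treg y) h1 h2).
Qed.

Canonical eT_equiv := EquivRel eT eT_refl eT_sym eT_trans.
Definition Qt := {eq_quot eT}.
HB.instance Definition _ : EqQuotient _ eT Qt := EqQuotient.on Qt.
HB.instance Definition _ := Choice.on Qt.

Definition piQ (p : R * R) : Qt := \pi_Qt (mk p).

Lemma piQ_eq p q : rp p -> rp q -> piQ p = piQ q <-> Ep p q.
Proof.
move=> hp hq; rewrite /piQ; split.
  by move/eqmodP/asboolP; rewrite !val_mk.
by move=> h; apply/eqmodP/asboolP; rewrite !val_mk.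
Qed.

Lemma Qind (P : Qt -> Prop) : (forall p, rp p -> P (piQ p)) -> forall a, P a.
Proof.
move=> h; elim/quotW => x; rewrite -(mk_val x); apply: h; exact: Treg.
Qed.

Definition rq (a : Qt) : R * R := val (repr a).
Lemma rq_reg a : rp (rq a). Proof. exact: Treg. Qed.
Lemma rqE p : rp p -> Ep (rq (piQ p)) p.
Proof.
move=> hp; have := reprK (piQ p); rewrite -[repr _]mk_val.
by move/(piQ_eq (rq_reg _) hp).
Qed.

Lemma rpA (p q : R * R) : rp p -> rp q -> rp (addR p q). Proof. exact: rp_add. Qed.
Lemma rpM (p q : R * R) : rp p -> rp q -> rp (mulR p q). Proof. exact: rp_mul. Qed.
Lemma rpN (p : R * R) : rp p -> rp (oppR p). Proof. exact: rp_opp. Qed.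
Lemma rpOne (n : R) : rp (1, n). Proof. exact: rp1. Qed.
Local Hint Resolve rpA rpM rpN rpOne rq_reg : core.

Lemma piQ_eqI p q : rp p -> rp q -> Ep p q -> piQ p = piQ q.
Proof. by move=> hp hq /(piQ_eq hp hq). Qed.

Definition zeroQ : Qt := piQ (1, 0).
Definition oneQ : Qt := piQ (1, 1).
Definition addQ (a b : Qt) : Qt := piQ (addR (rq a) (rq b)).
Definition oppQ (a : Qt) : Qt := piQ (oppR (rq a)).
Definition mulQ (a b : Qt) : Qt := piQ (mulR (rq a) (rq b)).

Lemma addQE p q : rp p -> rp q -> addQ (piQ p) (piQ q) = piQ (addR p q).
Proof.
move=> hp hq; apply/piQ_eq; try apply: rp_add => //; try exact: rq_reg.
by apply: add_resp => //; try exact: rq_reg; apply: rqE.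
Qed.

Lemma oppQE p : rp p -> oppQ (piQ p) = piQ (oppR p).
Proof.
move=> hp; apply/piQ_eq; try apply: rp_opp => //; try exact: rq_reg.
by apply: opp_resp; apply: rqE.
Qed.

Lemma mulQE p q : rp p -> rp q -> mulQ (piQ p) (piQ q) = piQ (mulR p q).
Proof.
move=> hp hq; apply/piQ_eq; try apply: rp_mul => //; try exact: rq_reg.
by apply: mul_resp => //; try exact: rq_reg; apply: rqE.
Qed.

Lemma addQA : associative addQ.
Proof.
elim/Qind => p hp; elim/Qind => q hq; elim/Qind => r hr.
rewrite (addQE hq hr) (addQE hp hq) (addQE hp (rpA hq hr)) (addQE (rpA hp hq) hr).
apply: piQ_eqI; try by auto.
apply: addA_R; by auto.
Qed.

Lemma addQC : commutative addQ.
Proof.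
elim/Qind => p hp; elim/Qind => q hq; rewrite !addQE; try by auto.
apply: piQ_eqI; try by auto.
apply: addC_R; by auto.
Qed.

Lemma add0Q : left_id zeroQ addQ.
Proof.
elim/Qind => p hp; rewrite addQE; try by auto.
apply: piQ_eqI; try by auto.
apply: add0_R; by auto.
Qed.

Lemma addNQ : left_inverse zeroQ oppQ addQ.
Proof.
elim/Qind => p hp; rewrite oppQE // addQE; try by auto.
apply: piQ_eqI; try by auto.
apply: addN_R; by auto.
Qed.

HB.instance Definition _ := GRing.isZmodule.Build Qt addQA addQC add0Q addNQ.

Lemma mulQA : associative mulQ.
Proof.
elim/Qind => p hp; elim/Qind => q hq; elim/Qind => r hr.
rewrite (mulQE hq hr) (mulQE hp hq) (mulQE hp (rpM hq hr)) (mulQE (rpM hp hq) hr).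
apply: piQ_eqI; try by auto.
apply: mulA_R; by auto.
Qed.

Lemma mul1Q : left_id oneQ mulQ.
Proof.
elim/Qind => p hp; rewrite mulQE; try by auto.
apply: piQ_eqI; try by auto.
apply: mul1l_R; by auto.
Qed.

Lemma mulQ1 : right_id oneQ mulQ.
Proof.
elim/Qind => p hp; rewrite mulQE; try by auto.
apply: piQ_eqI; try by auto.
apply: mul1r_R; by auto.
Qed.

Lemma mulQDl : left_distributive mulQ addQ.
Proof.
elim/Qind => p hp; elim/Qind => q hq; elim/Qind => r hr.
rewrite (addQE hp hq) (mulQE hp hr) (mulQE hq hr) (mulQE (rpA hp hq) hr).
rewrite (addQE (rpM hp hr) (rpM hq hr)).
apply: piQ_eqI; try by auto.
apply: mulDl_R; by auto.
Qed.

Lemma mulQDr : right_distributive mulQ addQ.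
Proof.
elim/Qind => p hp; elim/Qind => q hq; elim/Qind => r hr.
rewrite (addQE hq hr) (mulQE hp hq) (mulQE hp hr) (mulQE hp (rpA hq hr)).
rewrite (addQE (rpM hp hq) (rpM hp hr)).
apply: piQ_eqI; try by auto.
apply: mulDr_R; by auto.
Qed.

Lemma oneQ_neq0 : oneQ != zeroQ.
Proof.
apply/eqP => /piQ_eq; move=> /(_ (rpOne _) (rpOne _)) /ker_R.
by move/eqP; rewrite oner_eq0.
Qed.

HB.instance Definition _ := GRing.Zmodule_isNzRing.Build Qt
  mulQA mul1Q mulQ1 mulQDl mulQDr oneQ_neq0.

Definition fQ (r : R) : Qt := piQ (1, r).

Lemma fQ_zmod : zmod_morphism fQ.
Proof.
move=> x y; change (fQ (x - y) = addQ (fQ x) (oppQ (fQ y))).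
rewrite /fQ (oppQE (rpOne y)) (addQE (rpOne x) (rpN (rpOne y))).
apply: piQ_eqI; try by auto.
apply: Ep_sym; exact: addE_R.
Qed.

Lemma fQ_monoid : monoid_morphism fQ.
Proof.
split=> // x y; change (fQ (x * y) = mulQ (fQ x) (fQ y)).
rewrite /fQ (mulQE (rpOne x) (rpOne y)); apply: piQ_eqI; try by auto.
apply: Ep_sym; exact: mulE_R.
Qed.

HB.instance Definition _ := GRing.isZmodMorphism.Build R Qt fQ fQ_zmod.
HB.instance Definition _ := GRing.isMonoidMorphism.Build R Qt fQ fQ_monoid.

Lemma loc_quot : is_left_quotient (@regular R) (fQ : {rmorphism R -> Qt}).
Proof.
split.
- move=> s rs; exists (piQ (s, 1)); split.
    change (mulQ (piQ (s, 1)) (piQ (1, s)) = oneQ).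
    rewrite mulQE //; apply: piQ_eqI; try by auto.
    exact: unitl_R.
  change (mulQ (piQ (1, s)) (piQ (s, 1)) = oneQ).
  rewrite mulQE //; apply: piQ_eqI; try by auto.
  exact: unitr_R.
- elim/Qind => -[s r] hp; exists s, r; split=> //.
  change (mulQ (piQ (1, s)) (piQ (s, r)) = piQ (1, r)).
  rewrite mulQE //; apply: piQ_eqI; try by auto.
  exact: frac_R.
- move=> r; split.
    move=> e; exists 1; split; first exact: regular1.
    rewrite mul1r; apply: ker_R; apply/piQ_eq => //.
  by move=> [s [[h _] e]]; rewrite (h _ e) rmorph0.
Qed.

End Loc.

Lemma loc_exists (R : nzRingType) : left_ore (@regular R) ->
  exists (Q : nzRingType) (f : {rmorphism R -> Q}), is_left_quotient (@regular R) f.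
Proof. by move=> ore; exists (Qt ore), (fQ ore : {rmorphism R -> Qt ore}); exact: loc_quot. Qed.

Section Final.
Variable R : nzRingType.

Lemma c5_c2 : cond5 R -> left_ore (@regular R) /\
  exists (Q : nzRingType) (f : {rmorphism R -> Q}),
    is_left_quotient (@regular R) f /\ semisimple Q.
Proof.
move=> c5; have ore := c5_ore c5; split=> //.
have [Q [f hf]] := loc_exists ore.
by exists Q, f; split=> //; apply: (ss_of_c5 c5 hf).
Qed.

Lemma c4_c5 : [/\ finite_left_rank R, acc_left_annihilators R & semiprime R] -> cond5 R.
Proof.
move=> [fr acc sp] L hL; split; first exact: goldie.
exact: reg_ess.
Qed.

End Final.

Theorem theorem2p9 (R : nzRingType) :
  let c1 := exists (Q : nzRingType) (f : {rmorphism R -> Q}),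
              is_left_quotient (@S0 R) f /\ semisimple Q in
  let c2 := left_ore (@regular R) /\
            exists (Q : nzRingType) (f : {rmorphism R -> Q}),
              is_left_quotient (@regular R) f /\ semisimple Q in
  let c3 := exists (Q : nzRingType) (f : {rmorphism R -> Q}),
              [/\ semisimple Q, left_ore (@regular R) &
                  is_left_quotient (@regular R) f] in
  let c4 := [/\ finite_left_rank R, acc_left_annihilators R & semiprime R] in
  let c5 := forall L : R -> Prop, left_ideal L ->
              (essential L <-> exists x, regular x /\ L x) in
  [<-> c1; c2; c3; c4; c5] /\
  ((c1 \/ c2 \/ c3 \/ c4 \/ c5) ->
     (forall x : R, S0 x <-> regular x) /\
     (forall (Q : nzRingType) (f : {rmorphism R -> Q}),
        is_left_quotient (@S0 R) f <-> is_left_quotient (@regular R) f)).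
Proof.
move=> c1 c2 c3 c4 c5.
have h12 : c1 -> c2 := @c1_c2 R.
have h23 : c2 -> c3.
  by move=> [ore [Q [f [hf ss]]]]; exists Q, f; split.
have h32 : c3 -> c2.
  by move=> [Q [f [ss ore hf]]]; split=> //; exists Q, f; split.
have h25 : c2 -> c5.
  by move=> [ore ex]; apply: c2_c5.
have h54 : c5 -> c4 := @c5_c4 R.
have h45 : c4 -> c5 := @c4_c5 R.
have h52 : c5 -> c2 := @c5_c2 R.
have h21 : c2 -> c1.
  move=> [ore [Q [f [hf ss]]]]; exists Q, f; split=> //.
  apply: (lqE _ hf) => x; exact: iff_sym (ore_regular_S0 ore x).
have fin : c2 -> (forall x : R, S0 x <-> regular x) /\
     (forall (Q : nzRingType) (f : {rmorphism R -> Q}),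
        is_left_quotient (@S0 R) f <-> is_left_quotient (@regular R) f).
  move=> [ore _]; have e := ore_regular_S0 ore; split=> // Q f; split; apply: lqE => x.
    exact: e.
  exact: iff_sym (e x).
split.
  rewrite /all_iff /=.
  apply: AllIffConj; first exact: h12.
  apply: AllIffConj; first exact: h23.
  apply: AllIffConj; first by move=> H; exact: h54 (h25 (h32 H)).
  apply: AllIffConj; first exact: h45.
  by move=> H; exact: h21 (h52 H).
move=> [H|[H|[H|[H|H]]]]; apply: fin.
- exact: h12.
- exact: H.
- exact: h32.
- exact: h52 (h45 H).
- exact: h52.
Qed.
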